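(* Let $a,b\in(0,1]$ and let $f:[0,1]\to[0,1]$ be $$f(x)=\begin{cases} x(1+a-ax), & 0\le x\le \tfrac12,\\ x(1-b+bx), & \tfrac12<x\le 1.\end{cases}$$ Let $x_0\in[0,1]\setminus\{\tfrac12\}$ and $x_i=f^i(x_0)$, and suppose the orbit $(x_i)_{i\ge0}$ avoids $\tfrac12$ (so that $f'(x_i)$ exists for all $i$). Then the Lyapunov exponent $$\lambda(x_0)=\lim_{n\to\infty}\frac1n\sum_{i=0}^{n-1}\ln|f'(x_i)|,$$ whenever this limit exists, is non-negative.
   Context: $f^i$ denotes the $i$-fold composition of $f$; $f$ is not differentiable at $\tfrac12$. *)

(* Defs.v *)
From Stdlib Require Import Reals List.
From Coquelicot Require Import Coquelicot.
Open Scope R_scope.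

(* The piecewise map f_{a,b}, extended to all of R by the same formulas
   (only its values / derivatives on [0,1] matter). *)
Definition fab (a b : R) (x : R) : R :=
  if Rle_dec x (1/2) then x * (1 + a - a * x) else x * (1 - b + b * x).

Definition orbit (a b x0 : R) (i : nat) : R := Nat.iter i (fab a b) x0.

Definition lyap_avg (a b x0 : R) (n : nat) : R :=
  / INR n * fold_right Rplus 0
    (map (fun i => ln (Rabs (Derive (fab a b) (orbit a b x0 i)))) (seq 0 n)).

(* Main.v *)
Require Import Defs.
From Stdlib Require Import Reals List Lra Lia.
From Coquelicot Require Import Coquelicot.
Open Scope R_scope.

Lemma deriv_ge1 (a b x : R) : 0 < a <= 1 -> 0 < b <= 1 -> x <> 1/2 ->
  1 <= Derive (fab a b) x.
Proof.
  intros Ha Hb Hx.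
  destruct (Rlt_dec x (1/2)) as [Hl|Hl].
  - assert (D : is_derive (fab a b) x (1 + a - 2*a*x)).
    { apply is_derive_ext_loc with (f := fun t => t * (1 + a - a * t)).
      + exists (mkposreal _ (Rlt_Rminus _ _ Hl)). intros y Hy.
        unfold ball in Hy; simpl in Hy; unfold AbsRing_ball, abs, minus, plus, opp in Hy; simpl in Hy.
        unfold fab. destruct (Rle_dec y (1/2)) as [_|N]; [reflexivity|].
        exfalso. apply Rabs_def2 in Hy. lra.
      + auto_derive; [exact I| ring]. }
    rewrite (is_derive_unique _ _ _ D). nra.
  - assert (Hg : 1/2 < x) by lra.
    assert (D : is_derive (fab a b) x (1 - b + 2*b*x)).
    { apply is_derive_ext_loc with (f := fun t => t * (1 - b + b * t)).
      + exists (mkposreal _ (Rlt_Rminus _ _ Hg)). intros y Hy.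
        unfold ball in Hy; simpl in Hy; unfold AbsRing_ball, abs, minus, plus, opp in Hy; simpl in Hy.
        unfold fab. destruct (Rle_dec y (1/2)) as [N|_]; [|reflexivity].
        exfalso. apply Rabs_def2 in Hy. lra.
      + auto_derive; [exact I| ring]. }
    rewrite (is_derive_unique _ _ _ D). nra.
Qed.

Lemma sum_nonneg (l : list R) : (forall x, In x l -> 0 <= x) -> 0 <= fold_right Rplus 0 l.
Proof.
  induction l as [|y l IH]; simpl; intros H. lra.
  assert (0 <= y) by (apply H; left; reflexivity).
  assert (0 <= fold_right Rplus 0 l) by (apply IH; intros; apply H; right; assumption).
  lra.
Qed.

Theorem proposition4p1 (a b x0 : R) (l : Rbar) :
  0 < a <= 1 -> 0 < b <= 1 ->
  0 <= x0 <= 1 -> x0 <> 1/2 ->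
  (forall i : nat, orbit a b x0 i <> 1/2) ->
  is_lim_seq (lyap_avg a b x0) l ->
  Rbar_le 0 l.
Proof.
  intros Ha Hb _ _ Horb Hl.
  apply (is_lim_seq_le (fun _ => 0) (lyap_avg a b x0) 0 l); [| apply is_lim_seq_const | exact Hl].
  intros n. unfold lyap_avg.
  apply Rmult_le_pos.
  - destruct n as [|n]. simpl. rewrite Rinv_0. lra.
    apply Rlt_le, Rinv_0_lt_compat, lt_0_INR. lia.
  - apply sum_nonneg. intros y Hy. apply in_map_iff in Hy.
    destruct Hy as [i [<- _]].
    pose proof (deriv_ge1 a b _ Ha Hb (Horb i)) as D.
    rewrite Rabs_pos_eq by lra. rewrite <- ln_1. apply ln_le; lra.
Qed.
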